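(* Let $\alpha,\beta,\gamma,\alpha',\beta',\gamma'\in\mathbb C$ with $\beta\beta'\neq0$ and $\alpha/\beta=\alpha'/\beta'+1$, and let $G(t,z)$ be the EGF of the GKP triangle $\left[\begin{array}{cc|c}\alpha,&\beta&\gamma\\ \alpha',&\beta'&\gamma'\end{array}\right]$. Put $\rho=\beta/(\beta+\beta't)$. If $\alpha\neq0$ then near $(0,0)$ $$G(t,z)=\Bigl\{1-\rho\bigl[1-(1-\alpha z/\rho)^{\beta/\alpha}\bigr]\Bigr\}^{-\gamma/\beta}\Bigl\{1-\tfrac{\beta't}{\beta+\beta't}\bigl[1-(1-\alpha z/\rho)^{-\beta/\alpha}\bigr]\Bigr\}^{\gamma'/\beta'},$$ and if $\alpha=0$ (i.e. $\alpha'=-\beta'$) then $$G(t,z)=\Bigl\{1-\rho\bigl[1-e^{-z(\beta+\beta't)}\bigr]\Bigr\}^{-\gamma/\beta}\Bigl\{1-\tfrac{\beta't}{\beta+\beta't}\bigl[1-e^{z(\beta+\beta't)}\bigr]\Bigr\}^{\gamma'/\beta'},$$ all powers being principal branches equal to $1$ at $z=0$.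
   Context: GKP triangle: for complex parameters $\alpha,\beta,\gamma,\alpha',\beta',\gamma'$, the array $T_{n,k}=\left[\begin{array}{cc|c}\alpha,&\beta&\gamma\\ \alpha',&\beta'&\gamma'\end{array}\right]_{n,k}$ is defined by $T_{0,0}=1$, $T_{n,k}=0$ if $n<0$, $k<0$ or $k>n$, and $T_{n+1,k+1}=[\alpha n+\beta(k+1)+\gamma]T_{n,k+1}+[\alpha' n+\beta' k+\gamma']T_{n,k}$ for $n\ge0$, $k\in\mathbb Z$; its EGF is $G(t,z)=\sum_{n\ge0}\sum_{k=0}^nT_{n,k}t^kz^n/n!$. *)

(* Defs.v *)
From Stdlib Require Import Reals Factorial.
From Coquelicot Require Import Coquelicot.
Open Scope C_scope.

Definition Carg (z : C) : R :=
  let x := fst z in let y := snd z in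
  if Rlt_dec 0 x then atan (y / x)
  else if Rlt_dec x 0 then
    (if Rle_dec 0 y then atan (y / x) + PI else atan (y / x) - PI)%R
  else (if Rlt_dec 0 y then PI / 2 else if Rlt_dec y 0 then - (PI / 2) else 0)%R.

Definition Cexpo (z : C) : C :=
  (exp (fst z) * cos (snd z), exp (fst z) * sin (snd z))%R.
Definition Clog (z : C) : C := (ln (Cmod z), Carg z).

(* Principal power a^b = exp(b Log a) (0^b := 0). *)
Definition Cprinpow (a b : C) : C := if Ceq_dec a 0 then 0 else Cexpo (b * Clog a).

Fixpoint Cnpow (a : C) (n : nat) : C :=
  match n with O => 1 | S m => a * Cnpow a m end.

Definition CN (n : nat) : C := RtoC (INR n).

(* GKP triangle T_{n,k}, for k >= 0; T_{n,k}=0 for k<0 is built in: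
   T_{n+1,0} = (alpha n + gamma) T_{n,0}. *)
Fixpoint GKP (a b g a' b' g' : C) (n k : nat) : C :=
  match n with
  | O => match k with O => 1 | S _ => 0 end
  | S m =>
    match k with
    | O => (a * CN m + b * CN 0 + g) * GKP a b g a' b' g' m O
    | S j => (a * CN m + b * CN (S j) + g) * GKP a b g a' b' g' m (S j)
             + (a' * CN m + b' * CN j + g') * GKP a b g a' b' g' m j
    end
  end.

Definition GKP_egf_term (a b g a' b' g' t z : C) (n : nat) : C :=
  sum_n (fun k => GKP a b g a' b' g' n k * Cnpow t k) n
  * Cnpow z n / RtoC (INR (fact n)).

(* Main.v *)
Require Import Defs.
From Stdlib Require Import Reals Lra Lia Psatz Factorial.
From Coquelicot Require Import Coquelicot.
Open Scope R_scope.

Lemma rd_eq (f : R -> R) (x l l' : R) : is_derive f x l -> l = l' -> is_derive f x l'.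
Proof. intros H ->; exact H. Qed.

Lemma rd_ext (f g : R -> R) (x l : R) : (forall y, f y = g y) -> is_derive f x l -> is_derive g x l.
Proof. intros E H. apply is_derive_ext with f; auto. Qed.

Lemma rd_const (c x : R) : is_derive (fun _ => c) x 0.
Proof. apply (is_derive_const c x). Qed.

Lemma rd_id (x : R) : is_derive (fun y => y) x 1.
Proof. apply (is_derive_id x). Qed.

Lemma rd_plus (f g : R -> R) (x df dg : R) : is_derive f x df -> is_derive g x dg ->
  is_derive (fun y => f y + g y) x (df + dg).
Proof. intros. apply (is_derive_plus f g x df dg); auto. Qed.

Lemma rd_minus (f g : R -> R) (x df dg : R) : is_derive f x df -> is_derive g x dg ->
  is_derive (fun y => f y - g y) x (df - dg).
Proof. intros. apply (is_derive_minus f g x df dg); auto. Qed.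

Lemma rd_opp (f : R -> R) (x df : R) : is_derive f x df -> is_derive (fun y => - f y) x (- df).
Proof. intros. apply (is_derive_opp f x df); auto. Qed.

Lemma rd_mult (f g : R -> R) (x df dg : R) : is_derive f x df -> is_derive g x dg ->
  is_derive (fun y => f y * g y) x (df * g x + f x * dg).
Proof. intros. apply (is_derive_mult f g x df dg); auto. intros; apply Rmult_comm. Qed.

Lemma rd_comp (f g : R -> R) (x df dg : R) : is_derive f (g x) df -> is_derive g x dg ->
  is_derive (fun y => f (g y)) x (dg * df).
Proof. intros. apply (is_derive_comp f g x df dg); auto. Qed.

Lemma rd_div (f g : R -> R) (x df dg : R) : is_derive f x df -> is_derive g x dg -> g x <> 0 ->
  is_derive (fun y => f y / g y) x ((df * g x - f x * dg) / g x ^ 2).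
Proof. intros. apply is_derive_div; auto. Qed.

Lemma rd_sq (f : R -> R) (x df : R) : is_derive f x df ->
  is_derive (fun y => f y ^ 2) x (2 * f x * df).
Proof.
  intros H. apply rd_ext with (fun y => f y * f y). intros; ring.
  eapply rd_eq. apply rd_mult; eauto. ring.
Qed.

Open Scope C_scope.

Definition Cder (f : R -> C) (x : R) (l : C) : Prop :=
  is_derive (fun y => fst (f y)) x (fst l) /\ is_derive (fun y => snd (f y)) x (snd l).

Lemma Cder_eq f x l l' : Cder f x l -> l = l' -> Cder f x l'.
Proof. intros H ->; exact H. Qed.

Lemma Cder_ext f g x l : (forall y, f y = g y) -> Cder f x l -> Cder g x l.
Proof. intros E [H1 H2]; split; eapply rd_ext; eauto; intros; simpl; rewrite E; auto. Qed.

Lemma Cder_const (c : C) x : Cder (fun _ => c) x 0.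
Proof. split; apply rd_const. Qed.

Lemma Cder_lin (c1 c2 : C) x : Cder (fun y => c1 + RtoC y * c2) x c2.
Proof.
  destruct c1 as [p1 q1]; destruct c2 as [p2 q2]; split; simpl.
  - eapply rd_eq. apply rd_plus. apply rd_const. apply rd_minus.
    apply rd_mult. apply rd_id. apply rd_const. apply rd_mult. apply rd_const. apply rd_const. simpl; ring.
  - eapply rd_eq. apply rd_plus. apply rd_const. apply rd_plus.
    apply rd_mult. apply rd_id. apply rd_const. apply rd_mult. apply rd_const. apply rd_const. simpl; ring.
Qed.

Lemma Cder_plus f g x df dg : Cder f x df -> Cder g x dg ->
  Cder (fun y => f y + g y) x (df + dg).
Proof. intros [A1 A2] [B1 B2]; split; simpl; apply rd_plus; auto. Qed.

Lemma Cder_minus f g x df dg : Cder f x df -> Cder g x dg ->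
  Cder (fun y => f y - g y) x (df - dg).
Proof. intros [A1 A2] [B1 B2]; split; simpl; eapply rd_eq; [apply rd_plus; [eauto| apply rd_opp; eauto] | simpl; ring | apply rd_plus; [eauto| apply rd_opp; eauto] | simpl; ring]. Qed.

Lemma Cder_mult f g x df dg : Cder f x df -> Cder g x dg ->
  Cder (fun y => f y * g y) x (df * g x + f x * dg).
Proof.
  intros [A1 A2] [B1 B2]; split; simpl.
  - eapply rd_eq. apply rd_minus; apply rd_mult; eauto. simpl; ring.
  - eapply rd_eq. apply rd_plus; apply rd_mult; eauto. simpl; ring.
Qed.

Lemma Cder_scal (c : C) f x df : Cder f x df -> Cder (fun y => c * f y) x (c * df).
Proof.
  intros H. eapply Cder_eq. apply Cder_mult. apply Cder_const. exact H. cbv beta. ring.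
Qed.

Lemma Cder_inv f x df : Cder f x df -> f x <> 0 ->
  Cder (fun y => / f y) x (- df / (f x * f x)).
Proof.
  intros [A1 A2] Hn.
  assert (Hp : (fst (f x) ^ 2 + snd (f x) ^ 2)%R <> 0%R).
  { intro E. apply Hn. destruct (f x) as [p q]; simpl in *.
    assert (p = 0%R) by nra. assert (q = 0%R) by nra. subst; reflexivity. }
  assert (Hd : is_derive (fun y : R => (fst (f y) ^ 2 + snd (f y) ^ 2)%R) x
     (2 * fst (f x) * fst df + 2 * snd (f x) * snd df)%R).
  { eapply rd_eq. apply rd_plus; apply rd_sq; eauto.
    cbv beta; ring. }
  split; cbn [Cinv fst snd].
  - eapply rd_eq. apply rd_div; eauto.
    cbv beta. destruct (f x) as [p q]; destruct df as [dp dq]; simpl in *.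
    assert (Hp' : (p * p + q * q)%R <> 0%R) by (intro E; apply Hp; nra).
    field; repeat split; auto; intro E; apply Hp'; nra.
  - eapply rd_eq. apply rd_div. apply rd_opp; eauto. exact Hd. auto.
    cbv beta. destruct (f x) as [p q]; destruct df as [dp dq]; simpl in *.
    assert (Hp' : (p * p + q * q)%R <> 0%R) by (intro E; apply Hp; nra).
    field; repeat split; auto; intro E; apply Hp'; nra.
Qed.

Lemma Cder_div f g x df dg : Cder f x df -> Cder g x dg -> g x <> 0 ->
  Cder (fun y => f y / g y) x ((df * g x - f x * dg) / (g x * g x)).
Proof.
  intros Hf Hg Hn. unfold Cdiv. eapply Cder_eq. apply Cder_mult. exact Hf.
  apply Cder_inv; eauto. cbv beta. field. auto.
Qed.

Definition CL (w : C) : C := (ln (Cmod w), atan (snd w / fst w)%R).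

Lemma Cder_exp f x df : Cder f x df -> Cder (fun y => Cexpo (f y)) x (df * Cexpo (f x)).
Proof.
  intros [A1 A2]; unfold Cexpo; split; simpl.
  - eapply rd_eq. apply rd_mult.
    apply (rd_comp exp (fun y => fst (f y))). apply is_derive_exp. eauto.
    apply (rd_comp cos (fun y => snd (f y))). apply is_derive_cos. eauto.
    cbv beta; simpl; ring.
  - eapply rd_eq. apply rd_mult.
    apply (rd_comp exp (fun y => fst (f y))). apply is_derive_exp. eauto.
    apply (rd_comp sin (fun y => snd (f y))). apply is_derive_sin. eauto.
    cbv beta; simpl; ring.
Qed.

Lemma Cder_CL f x df : Cder f x df -> (0 < fst (f x))%R ->
  Cder (fun y => CL (f y)) x (df / f x).
Proof.
  intros [A1 A2] Hp. unfold CL, Cmod.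
  assert (Hs : (0 < fst (f x) ^ 2 + snd (f x) ^ 2)%R) by nra.
  assert (Hd : is_derive (fun y : R => (fst (f y) ^ 2 + snd (f y) ^ 2)%R) x
     (2 * fst (f x) * fst df + 2 * snd (f x) * snd df)%R).
  { eapply rd_eq. apply rd_plus; apply rd_sq; eauto.
    cbv beta; ring. }
  split.
  - eapply rd_eq. apply (rd_comp ln (fun y => sqrt (fst (f y) ^ 2 + snd (f y) ^ 2))).
    apply is_derive_ln. apply sqrt_lt_R0. exact Hs.
    apply is_derive_sqrt. exact Hd. exact Hs.
    cbv beta. cbn [fst snd Cdiv Cmult Cinv].
    destruct (f x) as [p q]; destruct df as [dp dq]; cbn [fst snd] in *.
    assert (Hq : (sqrt (p ^ 2 + q ^ 2) * sqrt (p ^ 2 + q ^ 2) = p ^ 2 + q ^ 2)%R)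
      by (apply sqrt_sqrt; lra).
    assert (0 < sqrt (p ^ 2 + q ^ 2))%R by (apply sqrt_lt_R0; lra).
    field_simplify; try lra.
    replace (sqrt (p^2+q^2) ^ 2)%R with (p^2+q^2)%R by (transitivity (sqrt (p^2+q^2) * sqrt (p^2+q^2))%R; [symmetry; exact Hq | ring]). field. lra.
  - eapply rd_eq. apply (rd_comp atan (fun y => (snd (f y) / fst (f y))%R)).
    apply is_derive_atan. apply rd_div; eauto. apply Rgt_not_eq. exact Hp.
    cbv beta. cbn [fst snd Cdiv Cmult Cinv].
    destruct (f x) as [p q]; destruct df as [dp dq]; cbn [fst snd] in *. unfold Rsqr. field.
    split; lra.
Qed.

Lemma Cder_npow f x df n : Cder f x df ->
  Cder (fun y => Cnpow (f y) n) x (CN n * Cnpow (f x) (pred n) * df).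
Proof.
  intros H. induction n as [|n IH].
  - simpl. eapply Cder_eq. apply Cder_const. unfold CN; simpl. apply injective_projections; simpl; ring.
  - simpl. eapply Cder_eq. apply Cder_mult. exact H. exact IH.
    destruct n as [|n]; unfold CN.
    + simpl. apply injective_projections; simpl; ring.
    + replace (INR (S (S n))) with (INR (S n) + 1)%R by (rewrite (S_INR (S n)); ring).
      rewrite RtoC_plus. cbn [pred Cnpow]. ring.
Qed.
Open Scope C_scope.

Lemma Cmod_le_sum (w : C) : (Cmod w <= Rabs (fst w) + Rabs (snd w))%R.
Proof.
  pose proof (Rabs_pos (fst w)). pose proof (Rabs_pos (snd w)).
  unfold Cmod. apply Rsqr_incr_0_var.
  - rewrite Rsqr_sqrt. rewrite <- (pow2_abs (fst w)), <- (pow2_abs (snd w)).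
    unfold Rsqr. nra.
    pose proof (pow2_ge_0 (fst w)); pose proof (pow2_ge_0 (snd w)); lra.
  - lra.
Qed.

Lemma Cmod_fst (w : C) : (Rabs (fst w) <= Cmod w)%R.
Proof. pose proof (Rmax_Cmod w). pose proof (Rmax_l (Rabs (fst w)) (Rabs (snd w))). lra. Qed.
Lemma Cmod_snd (w : C) : (Rabs (snd w) <= Cmod w)%R.
Proof. pose proof (Rmax_Cmod w). pose proof (Rmax_r (Rabs (fst w)) (Rabs (snd w))). lra. Qed.

Lemma rMVT (f df : R -> R) (M : R) :
  (forall x, (0 <= x <= 1)%R -> is_derive f x (df x)) ->
  (forall x, (0 <= x <= 1)%R -> Rabs (df x) <= M)%R ->
  (Rabs (f 1 - f 0) <= M)%R.
Proof.
  intros Hd HM.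
  destruct (MVT_gen f 0 1 df) as [c [Hc E]].
  - intros x Hx. apply Hd. rewrite Rmin_left, Rmax_right in Hx; lra.
  - intros x Hx. rewrite Rmin_left, Rmax_right in Hx by lra.
    apply continuity_pt_filterlim. apply (ex_derive_continuous (K:=R_AbsRing) (V:=R_NormedModule) f). exists (df x). apply Hd; lra.
  - rewrite Rmin_left, Rmax_right in Hc by lra. rewrite E.
    replace (df c * (1 - 0))%R with (df c) by ring. apply HM; lra.
Qed.

Lemma CMVT (f df : R -> C) (M : R) :
  (forall x, (0 <= x <= 1)%R -> Cder f x (df x)) ->
  (forall x, (0 <= x <= 1)%R -> Cmod (df x) <= M)%R ->
  (Cmod (f 1 - f 0) <= 2 * M)%R.
Proof.
  intros Hd HM.
  assert (H1 : (Rabs (fst (f 1) - fst (f 0)) <= M)%R).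
  { apply (rMVT (fun y => fst (f y)) (fun y => fst (df y))).
    intros x Hx; apply (Hd x Hx). intros x Hx. eapply Rle_trans. apply Cmod_fst. auto. }
  assert (H2 : (Rabs (snd (f 1) - snd (f 0)) <= M)%R).
  { apply (rMVT (fun y => snd (f y)) (fun y => snd (df y))).
    intros x Hx; apply (Hd x Hx). intros x Hx. eapply Rle_trans. apply Cmod_snd. auto. }
  eapply Rle_trans. apply Cmod_le_sum. simpl. unfold Rminus in H1, H2. lra.
Qed.

Lemma Cexpo_add (u v : C) : Cexpo (u + v) = Cexpo u * Cexpo v.
Proof.
  destruct u as [a b]; destruct v as [c d]; unfold Cexpo; simpl.
  rewrite exp_plus, cos_plus, sin_plus.
  apply injective_projections; simpl; ring.
Qed.

Lemma Cexpo_0 : Cexpo 0 = 1.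
Proof. unfold Cexpo; simpl. rewrite exp_0, cos_0, sin_0. apply injective_projections; simpl; ring. Qed.

Lemma Cexpo_opp (w : C) : Cexpo w * Cexpo (- w) = 1.
Proof. rewrite <- Cexpo_add. replace (w + - w) with (RtoC 0) by ring. apply Cexpo_0. Qed.

Lemma Cmod_Cexpo (w : C) : Cmod (Cexpo w) = exp (fst w).
Proof.
  unfold Cmod, Cexpo; simpl.
  replace ((exp (fst w) * cos (snd w)) * ((exp (fst w) * cos (snd w)) * 1) +
    (exp (fst w) * sin (snd w)) * ((exp (fst w) * sin (snd w)) * 1))%R
    with (exp (fst w) * exp (fst w) * (Rsqr (sin (snd w)) + Rsqr (cos (snd w))))%R
    by (unfold Rsqr; ring).
  rewrite sin2_cos2, Rmult_1_r. apply sqrt_square. pose proof (exp_pos (fst w)); lra.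
Qed.

Lemma Cexpo_neq0 (w : C) : Cexpo w <> 0.
Proof. intro E. pose proof (Cmod_Cexpo w). rewrite E, Cmod_0 in H. pose proof (exp_pos (fst w)). lra. Qed.


Lemma Cmod_Cexpo_le (w : C) : (Cmod (Cexpo w) <= exp (Cmod w))%R.
Proof.
  rewrite Cmod_Cexpo. pose proof (Cmod_fst w).
  destruct (Req_dec (fst w) (Cmod w)) as [E|E]. rewrite E; lra.
  left. apply exp_increasing. pose proof (Rle_abs (fst w)). lra.
Qed.

Lemma Cexpo_CL (w : C) : (0 < fst w)%R -> Cexpo (CL w) = w.
Proof.
  intros Hp. destruct w as [p q]; simpl in Hp. unfold Cexpo, CL; simpl.
  assert (Hm : (0 < Cmod (p, q))%R). { apply Cmod_gt_0. intro E. inversion E. lra. }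
  rewrite exp_ln by exact Hm. rewrite cos_atan, sin_atan.
  assert (Hs : sqrt (1 + (q / p)²) = (Cmod (p, q) / p)%R).
  { apply Rsqr_inj. apply sqrt_pos. left; apply Rdiv_lt_0_compat; auto.
    rewrite Rsqr_sqrt. rewrite Rsqr_div'. unfold Cmod. 
    rewrite Rsqr_div'. rewrite Rsqr_sqrt. simpl. unfold Rsqr. field. lra. simpl; nra.
    pose proof (Rle_0_sqr (q/p)); lra. }
  rewrite Hs. apply injective_projections; simpl; field; lra.
Qed.

Lemma CL_Cexpo (w : C) : (Rabs (snd w) < PI / 2)%R -> CL (Cexpo w) = w.
Proof.
  intros Hb. destruct w as [a b]; simpl in Hb. unfold CL.
  rewrite Cmod_Cexpo, ln_exp. unfold Cexpo; simpl.
  assert (Hc : (0 < cos b)%R) by (apply cos_gt_0; apply Rabs_def2 in Hb; lra).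
  replace (exp a * sin b / (exp a * cos b))%R with (tan b).
  rewrite atan_tan. reflexivity. apply Rabs_def2 in Hb; lra.
  unfold tan. field. split. lra. pose proof (exp_pos a); lra.
Qed.

Lemma Clog_CL (w : C) : (0 < fst w)%R -> Clog w = CL w.
Proof.
  intros Hp. unfold Clog, CL, Carg. destruct (Rlt_dec 0 (fst w)); [reflexivity | lra].
Qed.

Lemma CL_1 : CL 1 = 0.
Proof.
  unfold CL. rewrite Cmod_1, ln_1. simpl. replace (0/1)%R with 0%R by field. rewrite atan_0. reflexivity.
Qed.

Lemma Cprinpow_CL (a b : C) : (0 < fst a)%R -> Cprinpow a b = Cexpo (b * CL a).
Proof.
  intros Hp. unfold Cprinpow. destruct (Ceq_dec a 0) as [E|E].
  - subst. simpl in Hp. lra.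
  - rewrite Clog_CL; auto.
Qed.

Lemma fst_pos_near1 (w : C) (d : R) : (Cmod (w - 1) <= d)%R -> (d < 1)%R -> (1 - d <= fst w)%R.
Proof.
  intros H Hd. pose proof (Cmod_fst (w - 1)). simpl in H0.
  pose proof (Rle_abs (- (fst w + - (1))))%R. rewrite Rabs_Ropp in H1. lra.
Qed.

Lemma Cmod_lower (w : C) (d : R) : (Cmod (w - 1) <= d)%R -> (1 - d <= Cmod w)%R.
Proof.
  intros H. pose proof (Cmod_triangle (w - 1) (- w)).
  replace (w - 1 + - w) with (- (1)) in H0 by ring. rewrite Cmod_m1, Cmod_opp in H0. lra.
Qed.

Lemma Cmod_upper (w : C) (d : R) : (Cmod (w - 1) <= d)%R -> (Cmod w <= 1 + d)%R.
Proof.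
  intros H. pose proof (Cmod_triangle (w - 1) 1).
  replace (w - 1 + 1) with w in H0 by ring. rewrite Cmod_1 in H0. lra.
Qed.

Lemma CL_small (w : C) (d : R) : (Cmod (w - 1) <= d)%R -> (d <= 1/2)%R ->
  (Cmod (CL w) <= 4 * d)%R.
Proof.
  intros H Hd.
  set (f := fun y : R => 1 + RtoC y * (w - 1)).
  assert (Hf : forall y, (0 <= y <= 1)%R -> (Cmod (f y - 1) <= d)%R).
  { intros y Hy. unfold f. replace (1 + y * (w - 1) - 1) with (RtoC y * (w - 1)) by ring.
    rewrite Cmod_mult, Cmod_R, Rabs_pos_eq by lra. pose proof (Cmod_ge_0 (w-1)). nra. }
  pose proof (CMVT (fun y => CL (f y)) (fun y => (w - 1) / f y) (2 * d)) as M.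
  assert (E1 : f 1 = w) by (unfold f; ring).
  assert (E0 : f 0 = 1) by (unfold f; ring).
  cbv beta in M. rewrite E1, E0, CL_1 in M. replace (CL w - 0) with (CL w) in M by ring.
  replace (4 * d)%R with (2 * (2 * d))%R by ring. apply M.
  - intros x Hx. apply Cder_CL. apply Cder_lin. eapply Rlt_le_trans; [|apply (fst_pos_near1 _ d); auto; lra]. lra.
  - intros x Hx. pose proof (Hf x Hx). pose proof (Cmod_lower _ _ H0).
    assert (f x <> 0). { intro E. rewrite E, Cmod_0 in H1. lra. }
    rewrite Cmod_div by auto. apply Rle_div_l. lra. pose proof (Cmod_ge_0 (w - 1)). nra.
Qed.

Lemma Cexpo_small (w : C) : (Cmod w <= 1)%R -> (Cmod (Cexpo w - 1) <= 6 * Cmod w)%R.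
Proof.
  intros H.
  pose proof (CMVT (fun y => Cexpo (RtoC y * w)) (fun y => w * Cexpo (RtoC y * w)) (3 * Cmod w)) as M.
  cbv beta in M. replace (RtoC 1 * w) with w in M by ring. replace (RtoC 0 * w) with (RtoC 0) in M by ring.
  rewrite Cexpo_0 in M. replace (6 * Cmod w)%R with (2 * (3 * Cmod w))%R by ring. apply M.
  - intros x Hx. eapply Cder_eq. apply Cder_exp.
    eapply Cder_ext. 2: apply (Cder_lin 0 w). intros; simpl; ring. reflexivity.
  - intros x Hx. rewrite Cmod_mult. pose proof (Cmod_Cexpo_le (RtoC x * w)).
    rewrite Cmod_mult, Cmod_R, Rabs_pos_eq in H0 by lra.
    assert (exp (x * Cmod w) <= exp 1)%R.
    { destruct (Req_dec (x * Cmod w) 1). rewrite H1; lra. left; apply exp_increasing.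
      pose proof (Cmod_ge_0 w). nra. }
    pose proof exp_le_3. pose proof (Cmod_ge_0 w). pose proof (Cmod_ge_0 (Cexpo (RtoC x * w))). nra.
Qed.
Open Scope C_scope.

Fixpoint Csum (f : nat -> C) (n : nat) : C :=
  match n with O => f O | S m => Csum f m + f (S m) end.

Lemma sum_n_Csum (f : nat -> C) n : sum_n f n = Csum f n.
Proof.
  induction n. rewrite sum_O; reflexivity.
  rewrite sum_Sn, IHn. reflexivity.
Qed.

Lemma Csum_ext (f g : nat -> C) n : (forall k, (k <= n)%nat -> f k = g k) -> Csum f n = Csum g n.
Proof.
  induction n; intros H; simpl. apply H; lia.
  rewrite IHn by (intros; apply H; lia). rewrite H by lia. reflexivity.
Qed.

Lemma Csum_plus (f g : nat -> C) n : Csum (fun k => f k + g k) n = Csum f n + Csum g n.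
Proof. induction n; simpl; auto. rewrite IHn; ring. Qed.

Lemma Csum_scal (c : C) (f : nat -> C) n : Csum (fun k => c * f k) n = c * Csum f n.
Proof. induction n; simpl; auto. rewrite IHn; ring. Qed.

Lemma Csum_shift (f : nat -> C) n : Csum f (S n) = f O + Csum (fun k => f (S k)) n.
Proof. induction n. simpl. ring. simpl in *. rewrite IHn. ring. Qed.

Lemma Csum_zero (f : nat -> C) n : (forall k, (k <= n)%nat -> f k = 0) -> Csum f n = 0.
Proof. induction n; intros H; simpl. apply H; lia. rewrite IHn by (intros; apply H; lia). rewrite H by lia. ring. Qed.


Fixpoint Rsum (f : nat -> R) (n : nat) : R :=
  match n with O => f O | S m => (Rsum f m + f (S m))%R end.

Lemma Csum_norm (f : nat -> C) n : (Cmod (Csum f n) <= Rsum (fun k => Cmod (f k)) n)%R.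
Proof.
  induction n; simpl. lra. eapply Rle_trans. apply Cmod_triangle. lra.
Qed.

Lemma Rsum_le f g n : (forall k, (k <= n)%nat -> f k <= g k)%R -> (Rsum f n <= Rsum g n)%R.
Proof. induction n; intros H; simpl. apply H; lia. pose proof (H (S n) (le_n _)). pose proof (IHn (fun k Hk => H k (le_S _ _ Hk))). lra. Qed.

Lemma Rsum_const c n : Rsum (fun _ => c) n = (INR (S n) * c)%R.
Proof. induction n; simpl Rsum. simpl; ring. rewrite IHn. rewrite (S_INR (S n)). ring. Qed.


Definition Pp a b g a' b' g' n t := Csum (fun k => GKP a b g a' b' g' n k * Cnpow t k) n.
Definition Dp a b g a' b' g' n t := Csum (fun k => CN k * GKP a b g a' b' g' n k * Cnpow t k) n.

Lemma GKP_zero a b g a' b' g' n k : (n < k)%nat -> GKP a b g a' b' g' n k = 0.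
Proof.
  revert k. induction n; intros k Hk.
  - destruct k. lia. reflexivity.
  - destruct k. lia. simpl. rewrite IHn by lia. rewrite IHn by lia. ring.
Qed.

Lemma CN_S k : CN (S k) = CN k + 1.
Proof. unfold CN. rewrite S_INR. rewrite RtoC_plus. reflexivity. Qed.

Lemma CN_0 : CN 0 = 0.
Proof. reflexivity. Qed.

Lemma P_rec a b g a' b' g' n t :
  Pp a b g a' b' g' (S n) t =
  (a * CN n + g + t * (a' * CN n + g')) * Pp a b g a' b' g' n t
  + (b + b' * t) * Dp a b g a' b' g' n t.
Proof.
  set (T := GKP a b g a' b' g').
  unfold Pp, Dp. fold T. rewrite Csum_shift.
  assert (E1 : Csum (fun k => T (S n) (S k) * Cnpow t (S k)) n =
     Csum (fun k => (a * CN n + b * CN (S k) + g) * T n (S k) * Cnpow t (S k)) n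
   + t * Csum (fun k => (a' * CN n + b' * CN k + g') * T n k * Cnpow t k) n).
  { rewrite <- Csum_scal, <- Csum_plus. apply Csum_ext. intros k _.
    unfold T; simpl. fold T. ring. }
  rewrite E1.
  assert (E2 : (a * CN n + b * CN 0 + g) * T n 0%nat * Cnpow t 0 +
     Csum (fun k => (a * CN n + b * CN (S k) + g) * T n (S k) * Cnpow t (S k)) n
     = Csum (fun k => (a * CN n + b * CN k + g) * T n k * Cnpow t k) n).
  { rewrite <- (Csum_shift (fun k => (a * CN n + b * CN k + g) * T n k * Cnpow t k)).
    simpl Csum at 1. unfold T at 2. rewrite GKP_zero by lia. ring. }
  replace (T (S n) 0%nat * Cnpow t 0) with ((a * CN n + b * CN 0 + g) * T n 0%nat * Cnpow t 0)
    by (unfold T; simpl; ring).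
  rewrite Cplus_assoc, E2.
  assert (E3 : Csum (fun k => (a * CN n + b * CN k + g) * T n k * Cnpow t k) n =
     (a * CN n + g) * Csum (fun k => T n k * Cnpow t k) n + b * Csum (fun k => CN k * T n k * Cnpow t k) n).
  { rewrite <- !Csum_scal, <- Csum_plus. apply Csum_ext; intros; ring. }
  assert (E4 : Csum (fun k => (a' * CN n + b' * CN k + g') * T n k * Cnpow t k) n =
     (a' * CN n + g') * Csum (fun k => T n k * Cnpow t k) n + b' * Csum (fun k => CN k * T n k * Cnpow t k) n).
  { rewrite <- !Csum_scal, <- Csum_plus. apply Csum_ext; intros; ring. }
  rewrite E3, E4. ring.
Qed.

Lemma Cmod_CN k : Cmod (CN k) = INR k.
Proof. unfold CN. rewrite Cmod_R. apply Rabs_pos_eq. apply pos_INR. Qed.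

Lemma Cmod_Cnpow (t : C) k : Cmod (Cnpow t k) = (Cmod t ^ k)%R.
Proof. induction k; simpl. apply Cmod_1. rewrite Cmod_mult, IHk. reflexivity. Qed.

Definition Kc a b g a' b' g' : R :=
  (1 + Cmod a + Cmod b + Cmod g + Cmod a' + Cmod b' + Cmod g')%R.

Lemma Kc_ge1 a b g a' b' g' : (1 <= Kc a b g a' b' g')%R.
Proof.
  unfold Kc. pose proof (Cmod_ge_0 a). pose proof (Cmod_ge_0 b). pose proof (Cmod_ge_0 g).
  pose proof (Cmod_ge_0 a'). pose proof (Cmod_ge_0 b'). pose proof (Cmod_ge_0 g'). lra.
Qed.

Lemma coef_bound (x y z : C) (m j n : nat) (K : R) :
  (1 + Cmod x + Cmod y + Cmod z <= K)%R -> (m <= n)%nat -> (j <= S n)%nat ->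
  (Cmod (x * CN m + y * CN j + z) <= K * INR (S n))%R.
Proof.
  intros HK Hm Hj.
  eapply Rle_trans. apply Cmod_triangle. pose proof (Cmod_triangle (x * CN m) (y * CN j)).
  rewrite !Cmod_mult, !Cmod_CN in *.
  apply le_INR in Hm. apply le_INR in Hj. rewrite S_INR in *.
  pose proof (Cmod_ge_0 x). pose proof (Cmod_ge_0 y). pose proof (Cmod_ge_0 z). pose proof (pos_INR n).
  pose proof (pos_INR m). pose proof (pos_INR j).
  assert (Cmod x * INR m <= Cmod x * (INR n + 1))%R by nra.
  assert (Cmod y * INR j <= Cmod y * (INR n + 1))%R by nra.
  assert (Cmod z <= Cmod z * (INR n + 1))%R by nra.
  assert ((1 + Cmod x + Cmod y + Cmod z) * (INR n + 1) <= K * (INR n + 1))%R by nra.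
  nra.
Qed.

Lemma GKP_bound a b g a' b' g' n k :
  (Cmod (GKP a b g a' b' g' n k) <= (2 * Kc a b g a' b' g') ^ n * INR (fact n))%R.
Proof.
  set (K := Kc a b g a' b' g'). pose proof (Kc_ge1 a b g a' b' g') as HK1. fold K in HK1.
  assert (HKa : (1 + Cmod a + Cmod b + Cmod g <= K)%R).
  { unfold K, Kc. pose proof (Cmod_ge_0 a'). pose proof (Cmod_ge_0 b'). pose proof (Cmod_ge_0 g'). lra. }
  assert (HKb : (1 + Cmod a' + Cmod b' + Cmod g' <= K)%R).
  { unfold K, Kc. pose proof (Cmod_ge_0 a). pose proof (Cmod_ge_0 b). pose proof (Cmod_ge_0 g). lra. }
  revert k. induction n; intros k.
  - destruct k; simpl. rewrite Cmod_1. lra. rewrite Cmod_0. lra.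
  - assert (Hpos : (0 <= (2 * K) ^ n * INR (fact n))%R).
    { apply Rmult_le_pos. apply pow_le. lra. apply pos_INR. }
    replace ((2 * K) ^ S n * INR (fact (S n)))%R with
      (2 * (K * INR (S n)) * ((2 * K) ^ n * INR (fact n)))%R
      by (rewrite fact_simpl, mult_INR; simpl; ring).
    assert (HS : (1 <= INR (S n))%R) by (rewrite S_INR; pose proof (pos_INR n); lra).
    destruct k as [|j].
    + simpl GKP. rewrite Cmod_mult.
      pose proof (coef_bound a b g n 0 n K HKa (le_n _) (Nat.le_0_l _)).
      pose proof (IHn 0%nat). pose proof (Cmod_ge_0 (GKP a b g a' b' g' n 0)).
      pose proof (Cmod_ge_0 (a * CN n + b * CN 0 + g)).
      assert (0 <= K * INR (S n))%R by nra. nra.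
    + destruct (Nat.lt_ge_cases n j) as [Hj|Hj].
      * simpl GKP. rewrite !GKP_zero by lia. rewrite Cmult_0_r, Cmult_0_r, Cplus_0_l, Cmod_0.
        assert (0 <= K * INR (S n))%R by nra. nra.
      * simpl GKP. eapply Rle_trans. apply Cmod_triangle. rewrite !Cmod_mult.
        pose proof (coef_bound a b g n (S j) n K HKa (le_n _) ltac:(lia)).
        pose proof (coef_bound a' b' g' n j n K HKb (le_n _) ltac:(lia)).
        pose proof (IHn (S j)). pose proof (IHn j).
        pose proof (Cmod_ge_0 (GKP a b g a' b' g' n (S j))).
        pose proof (Cmod_ge_0 (GKP a b g a' b' g' n j)).
        pose proof (Cmod_ge_0 (a * CN n + b * CN (S j) + g)).
        pose proof (Cmod_ge_0 (a' * CN n + b' * CN j + g')).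
        assert (0 <= K * INR (S n))%R by nra. nra.
Qed.

Lemma P_bound a b g a' b' g' n t : (Cmod t <= 1)%R ->
  (Cmod (Pp a b g a' b' g' n t) <= INR (S n) * ((2 * Kc a b g a' b' g') ^ n * INR (fact n)))%R.
Proof.
  intros Ht. unfold Pp. eapply Rle_trans. apply Csum_norm.
  rewrite <- Rsum_const. apply Rsum_le. intros k _.
  rewrite Cmod_mult, Cmod_Cnpow. pose proof (GKP_bound a b g a' b' g' n k).
  pose proof (pow_le (Cmod t) k (Cmod_ge_0 t)). 
  assert (Cmod t ^ k <= 1)%R by (rewrite <- (pow1 k); apply pow_incr; split; auto; apply Cmod_ge_0).
  pose proof (Cmod_ge_0 (GKP a b g a' b' g' n k)). nra.
Qed.
Open Scope C_scope.

Lemma is_series_C (u : nat -> C) (l : C) :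
  (forall eps : R, (0 < eps)%R -> exists N0, forall N, (N0 <= N)%nat -> (Cmod (Csum u N - l) < eps)%R) ->
  is_series u l.
Proof.
  intros H P [eps HP]. destruct (H eps (cond_pos eps)) as [N0 HN].
  exists N0. intros N HN0. apply HP. apply C_NormedModule_mixin_compat1.
  rewrite sum_n_Csum. apply HN. lia.
Qed.

Lemma Cder_Csum (f : nat -> R -> C) (df : nat -> C) x n :
  (forall k, (k <= n)%nat -> Cder (f k) x (df k)) ->
  Cder (fun y => Csum (fun k => f k y) n) x (Csum df n).
Proof.
  induction n; intros H; simpl. apply H; lia.
  apply Cder_plus. apply IHn; intros; apply H; lia. apply H; lia.
Qed.

Lemma quad_nat N : ((N + 1) * (N + 2) <= 6 * 2 ^ N)%nat.
Proof.
  induction N. simpl. lia.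
  rewrite Nat.pow_succ_r'. destruct N. simpl. lia. nia.
Qed.

Lemma quad_le_pow2 N : (INR (N + 1) * INR (N + 2) <= 6 * 2 ^ N)%R.
Proof.
  rewrite <- mult_INR. replace (6 * 2 ^ N)%R with (INR (6 * 2 ^ N)).
  apply le_INR. apply quad_nat. rewrite mult_INR, pow_INR. replace (INR 6) with 6%R. replace (INR 2) with 2%R. reflexivity. all: simpl; lra.
Qed.

Lemma geom_small (Cst eps : R) : (0 < eps)%R -> exists N0, forall N, (N0 <= N)%nat -> (Cst * (/2) ^ N < eps)%R.
Proof.
  intros He. destruct (Rle_lt_dec Cst 0) as [Hc|Hc].
  - exists 0%nat. intros N _. pose proof (pow_le (/2) N). assert (0 <= /2)%R by lra. specialize (H H0). nra.
  - destruct (pow_lt_1_zero (/2) ltac:(rewrite Rabs_pos_eq; lra) (eps / Cst)) as [N0 HN].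
    apply Rdiv_lt_0_compat; auto.
    exists N0. intros N HN0. specialize (HN N HN0). rewrite Rabs_pos_eq in HN.
    apply (Rmult_lt_compat_l Cst) in HN; auto. replace (Cst * (eps / Cst))%R with eps in HN by (field; lra). lra.
    apply pow_le; lra.
Qed.


Lemma RtoC_neq (x : R) : (x <> 0)%R -> RtoC x <> 0.
Proof. intros H E. apply RtoC_inj in E. auto. Qed.

Definition term a b g a' b' g' (tt zz : R -> C) (n : nat) (y : R) : C :=
  Pp a b g a' b' g' n (tt y) * Cnpow (zz y) n / RtoC (INR (fact n)).

Lemma fact_neq0 n : RtoC (INR (fact n)) <> 0.
Proof. intro E. apply RtoC_inj in E. apply (INR_fact_neq_0 n). exact E. Qed.

Lemma CN_neq0 n : CN (S n) <> 0.
Proof. unfold CN. intro E. apply RtoC_inj in E. apply (not_0_INR (S n)); auto. Qed.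

Lemma fact_S_C n : RtoC (INR (fact (S n))) = CN (S n) * RtoC (INR (fact n)).
Proof. rewrite fact_simpl, mult_INR, RtoC_mult. reflexivity. Qed.

Lemma core a b g a' b' g' (tt zz mu E : R -> C) (M : R) :
  (forall y, (0 <= y <= 1)%R -> Cder tt y (- mu y * tt y * (b + b' * tt y))) ->
  (forall y, (0 <= y <= 1)%R -> Cder zz y (mu y * (1 - (a + a' * tt y) * zz y))) ->
  (forall y, (0 <= y <= 1)%R -> Cder E y (- mu y * (g + g' * tt y) * E y)) ->
  (forall y, (0 <= y <= 1)%R -> Cmod (tt y) <= 1)%R ->
  (forall y, (0 <= y <= 1)%R -> 2 * Kc a b g a' b' g' * Cmod (zz y) <= /4)%R ->
  (forall y, (0 <= y <= 1)%R -> Cmod (mu y * E y) <= M)%R ->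
  zz 0%R = 0 -> E 0%R = 1 -> E 1%R <> 0 ->
  is_series (GKP_egf_term a b g a' b' g' (tt 1%R) (zz 1%R)) (/ E 1%R).
Proof.
  intros Htt Hzz HE Hbt Hbz HM Hz0 HE0 HE1.
  set (T := term a b g a' b' g' tt zz).
  set (P := Pp a b g a' b' g').
  set (D := Dp a b g a' b' g').
  set (s := fun y => b + b' * tt y).
  set (c := fun y => a + a' * tt y).
  assert (dP : forall n y, (0 <= y <= 1)%R ->
    Cder (fun y => P n (tt y)) y (- mu y * s y * D n (tt y))).
  { intros n y Hy. unfold P, Pp, D, Dp. eapply Cder_eq. apply Cder_Csum.
    intros k _. apply Cder_scal. apply Cder_npow. apply Htt; auto.
    rewrite <- Csum_scal. apply Csum_ext. intros k _. unfold s.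
    destruct k. unfold CN; simpl. ring. simpl pred. simpl Cnpow. ring. }
  assert (dT : forall n y, (0 <= y <= 1)%R ->
    Cder (T n) y (mu y * (- s y * D n (tt y) * Cnpow (zz y) n
       + P n (tt y) * (CN n * Cnpow (zz y) (pred n)) * (1 - c y * zz y)) / RtoC (INR (fact n)))).
  { intros n y Hy. unfold T, term. fold P. eapply Cder_eq.
    apply Cder_div. apply Cder_mult. apply dP; auto. apply Cder_npow. apply Hzz; auto.
    apply Cder_const. apply fact_neq0.
    unfold c. field. apply fact_neq0. }
  set (H := fun N y => Csum (fun n => T n y) N).
  assert (dH : forall N y, (0 <= y <= 1)%R ->
    Cder (H N) y (mu y * ((g + g' * tt y) * H N y - P (S N) (tt y) * Cnpow (zz y) N / RtoC (INR (fact N))))).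
  { induction N; intros y Hy.
    - unfold H; simpl Csum. eapply Cder_eq. apply dT; auto.
      unfold P. rewrite P_rec. unfold T, term. fold P.
      assert (P0 : P 0%nat (tt y) = 1) by (unfold P, Pp; simpl; ring).
      assert (D0 : D 0%nat (tt y) = 0) by (unfold D, Dp, CN; simpl; ring).
      fold P D. rewrite P0, D0. unfold s, CN. simpl. field.
    - unfold H; simpl Csum. fold (H N). eapply Cder_eq. apply Cder_plus. apply IHN; auto. apply dT; auto.
      change (Csum (fun n => T n y) N) with (H N y).
      unfold T, term. fold P.
      replace (P (S (S N)) (tt y)) with ((a * CN (S N) + g + tt y * (a' * CN (S N) + g')) * P (S N) (tt y)
         + (b + b' * tt y) * D (S N) (tt y)) by (unfold P, D; symmetry; apply P_rec).
      rewrite fact_S_C. simpl pred. simpl Cnpow. unfold s, c.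
      replace (a * CN (S N) + g + tt y * (a' * CN (S N) + g')) with
        ((a + a' * tt y) * CN (S N) + (g + g' * tt y)) by ring.
      field. split. apply fact_neq0. apply CN_neq0. }
  set (Q := (2 * Kc a b g a' b' g')%R).
  assert (HQ : (2 <= Q)%R) by (unfold Q; pose proof (Kc_ge1 a b g a' b' g'); lra).
  assert (Hr : forall N y, (0 <= y <= 1)%R ->
     (Cmod (P (S N) (tt y) * Cnpow (zz y) N / RtoC (INR (fact N))) <= 6 * Q * (/2) ^ N)%R).
  { intros N y Hy. rewrite Cmod_div by apply fact_neq0. rewrite Cmod_mult, Cmod_Cnpow, Cmod_R.
    rewrite Rabs_pos_eq by apply pos_INR.
    pose proof (P_bound a b g a' b' g' (S N) (tt y) (Hbt y Hy)). fold P Q in H0.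
    rewrite fact_simpl, mult_INR in H0. simpl pow in H0.
    pose proof (INR_fact_lt_0 N).
    apply Rle_div_l. auto.
    pose proof (Hbz y Hy). fold Q in H2.
    assert (Hz : (Cmod (zz y) ^ N * Q ^ N <= (/4) ^ N)%R).
    { rewrite <- Rpow_mult_distr. apply pow_incr. split. pose proof (Cmod_ge_0 (zz y)). nra. lra. }
    assert (Hq : (INR (S (S N)) * INR (S N) <= 6 * 2 ^ N)%R).
    { pose proof (quad_le_pow2 N). replace (N+1)%nat with (S N) in H3 by lia.
      replace (N+2)%nat with (S (S N)) in H3 by lia. lra. }
    assert (E4 : ((/4) ^ N * 2 ^ N = (/2) ^ N)%R).
    { rewrite <- Rpow_mult_distr. f_equal. field. }
    pose proof (Cmod_ge_0 (P (S N) (tt y))). pose proof (pow_le (Cmod (zz y)) N (Cmod_ge_0 _)).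
    pose proof (pow_le Q N ltac:(lra)). pose proof (pow_le (/4) N ltac:(lra)).
    pose proof (pow_le (/2) N ltac:(lra)). pose proof (pow_le 2 N ltac:(lra)).
    set (A := Cmod (P (S N) (tt y))) in *. set (z := (Cmod (zz y) ^ N)%R) in *.
    set (q := (Q ^ N)%R) in *. set (f := INR (fact N)) in *.
    assert (A * z <= INR (S (S N)) * (Q * q * (INR (S N) * f)) * z)%R by nra.
    assert (INR (S (S N)) * (Q * q * (INR (S N) * f)) * z = Q * f * (INR (S (S N)) * INR (S N)) * (z * q))%R by ring.
    assert (Q * f * (INR (S (S N)) * INR (S N)) * (z * q) <= Q * f * (6 * 2 ^ N) * ((/4)^N))%R.
    { pose proof (pos_INR (S (S N))). pose proof (pos_INR (S N)).
      assert (0 <= Q * f)%R by nra.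
      apply Rmult_le_compat. apply Rmult_le_pos; auto. apply Rmult_le_pos; auto.
      apply Rmult_le_pos; auto.
      apply Rmult_le_compat_l. auto. auto. unfold z. auto. }
    assert (Q * f * (6 * 2 ^ N) * ((/4)^N) = 6 * Q * (/2)^N * f)%R.
    { rewrite <- E4. ring. }
    nra. }
  apply is_series_C. intros eps Heps.
  assert (HMp : (0 <= M)%R) by (eapply Rle_trans; [apply Cmod_ge_0 | apply (HM 0%R); lra]).
  pose proof (Cmod_gt_0 (E 1%R)) as [HE1' _]. specialize (HE1' HE1).
  destruct (geom_small (2 * M * (6 * Q) / Cmod (E 1%R)) eps Heps) as [N0 HN0].
  exists N0. intros N HN.
  pose proof (CMVT (fun y => H N y * E y)
     (fun y => - (mu y * E y) * (P (S N) (tt y) * Cnpow (zz y) N / RtoC (INR (fact N))))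
     (M * (6 * Q * (/2) ^ N))) as MV.
  assert (Hsum : Csum (GKP_egf_term a b g a' b' g' (tt 1%R) (zz 1%R)) N = H N 1%R).
  { unfold H. apply Csum_ext. intros k _. unfold T, term, GKP_egf_term, P, Pp. rewrite sum_n_Csum. reflexivity. }
  assert (H0 : H N 0%R = 1).
  { assert (T0 : T 0%nat 0%R = 1).
    { unfold T, term. rewrite Hz0. unfold Pp. simpl. field. }
    unfold H. destruct N as [|N']. simpl. exact T0.
    rewrite Csum_shift. rewrite Csum_zero. rewrite T0. ring.
    intros k _. unfold T, term. rewrite Hz0. simpl. unfold Cdiv. ring. }
  cbv beta in MV. rewrite H0, HE0 in MV.
  assert (Hb : (Cmod (H N 1%R * E 1%R - 1) <= 2 * (M * (6 * Q * (/ 2) ^ N)))%R).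
  { replace (RtoC 1 * RtoC 1) with (RtoC 1) in MV by ring. apply MV.
    - intros y Hy. eapply Cder_eq. apply Cder_mult. apply dH; auto. apply HE; auto. ring.
    - intros y Hy. rewrite Cmod_mult, Cmod_opp. apply Rmult_le_compat. apply Cmod_ge_0. apply Cmod_ge_0.
      apply HM; auto. apply Hr; auto. }
  rewrite Hsum.
  replace (H N 1%R - / E 1%R) with ((H N 1%R * E 1%R - 1) / E 1%R) by (field; auto).
  rewrite Cmod_div by auto. apply Rle_lt_trans with (2 * (M * (6 * Q * (/ 2) ^ N)) / Cmod (E 1%R))%R.
  apply Rmult_le_compat_r. left; apply Rinv_0_lt_compat; auto. auto.
  replace (2 * (M * (6 * Q * (/ 2) ^ N)) / Cmod (E 1%R))%R with (2 * M * (6 * Q) / Cmod (E 1%R) * (/2)^N)%R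
    by (field; lra).
  apply HN0; auto.
Qed.
Open Scope C_scope.

Lemma Cmod_sub_ge (u v : C) : (Cmod u - Cmod v <= Cmod (u + v))%R.
Proof.
  pose proof (Cmod_triangle (u + v) (- v)). replace (u + v + - v) with u in H by ring.
  rewrite Cmod_opp in H. lra.
Qed.

Lemma div_ge (u v k : R) : (0 < v)%R -> (k * v <= u)%R -> (k <= u / v)%R.
Proof.
  intros Hv H. replace k with (k * v / v)%R by (field; lra).
  unfold Rdiv. apply Rmult_le_compat_r. left; apply Rinv_0_lt_compat; auto. auto.
Qed.

Lemma Cmod_neq0 (u : C) : (0 < Cmod u)%R -> u <> 0.
Proof. intros H E. rewrite E, Cmod_0 in H. lra. Qed.

Lemma path_thm (a b g a' b' g' : C) (Wf : C -> C) (t z X0 : C) (tau dl : R) :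
  b <> 0 -> b' <> 0 -> a / b = a' / b' + 1 ->
  (Cmod t <= tau)%R -> (Cmod (X0 - 1) <= dl)%R -> (0 <= dl <= 1/8)%R -> (2 * tau <= 1)%R ->
  (6 * Cmod b' * tau <= Cmod b)%R -> (144 * (2 * Kc a b g a' b' g') * dl <= Cmod b)%R ->
  (forall x, Cmod (x - 1) <= dl -> Cmod (Wf x) <= 24 * Cmod (x - 1))%R ->
  (forall y, (0 <= y <= 1)%R -> Cder (fun y => Wf (1 + RtoC y * (X0 - 1))) y
      (- ((X0 - 1) / (1 + RtoC y * (X0 - 1))) * (1 - a * Wf (1 + RtoC y * (X0 - 1)) / b))) ->
  Wf 1 = 0 -> Wf X0 = z * (b + b' * t) ->
  is_series (GKP_egf_term a b g a' b' g' t z)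
    (Cexpo (- (g / b) * CL (X0 * (b + b' * (t / X0)) / (b + b' * t)))
     * Cexpo ((g' / b') * CL ((b + b' * (t / X0)) / (b + b' * t)))).
Proof.
  intros Hb Hb' Hrel Ht HX Hdl Htau Hbt Hbz HW1 HWd HW0 HWX.
  assert (Ha' : a' = (a / b - 1) * b').
  { rewrite Hrel. field; auto. }
  set (d := X0 - 1) in *.
  assert (HX0 : X0 = 1 + d) by (unfold d; ring).
  assert (HX0m : (7/8 <= Cmod X0)%R) by (pose proof (Cmod_lower X0 dl HX); lra).
  assert (HX0n : X0 <> 0) by (apply Cmod_neq0; lra).
  set (c0 := t / X0).
  assert (Hc0 : (Cmod c0 <= 8/7 * tau)%R).
  { unfold c0. rewrite Cmod_div by auto. apply Rle_div_l. lra. pose proof (Cmod_ge_0 t). nra. }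
  set (x := fun y : R => 1 + RtoC y * d).
  assert (Hx1 : forall y, (0 <= y <= 1)%R -> (Cmod (x y - 1) <= dl)%R).
  { intros y Hy. unfold x. replace (1 + RtoC y * d - 1) with (RtoC y * d) by ring.
    rewrite Cmod_mult, Cmod_R, Rabs_pos_eq by lra. pose proof (Cmod_ge_0 d). nra. }
  assert (Hxm : forall y, (0 <= y <= 1)%R -> (7/8 <= Cmod (x y) <= 9/8)%R).
  { intros y Hy. pose proof (Cmod_lower _ _ (Hx1 y Hy)). pose proof (Cmod_upper _ _ (Hx1 y Hy)). lra. }
  assert (Hxn : forall y, (0 <= y <= 1)%R -> x y <> 0).
  { intros y Hy. apply Cmod_neq0. pose proof (Hxm y Hy). lra. }
  assert (Hxp : forall y, (0 <= y <= 1)%R -> (0 < fst (x y))%R).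
  { intros y Hy. pose proof (fst_pos_near1 _ _ (Hx1 y Hy)). lra. }
  set (tt := fun y => c0 * x y).
  assert (Htt : forall y, (0 <= y <= 1)%R -> (Cmod (tt y) <= 9/7 * tau)%R).
  { intros y Hy. unfold tt. rewrite Cmod_mult. pose proof (Hxm y Hy). pose proof (Cmod_ge_0 c0). nra. }
  assert (Hbpos : (0 < Cmod b)%R) by (apply Cmod_gt_0; auto).
  assert (Hb'pos : (0 < Cmod b')%R) by (apply Cmod_gt_0; auto).
  assert (Htau0 : (0 <= tau)%R) by (pose proof (Cmod_ge_0 t); lra).
  set (s := fun y => b + b' * tt y).
  assert (Hbtt : forall y, (0 <= y <= 1)%R -> (Cmod (b' * tt y) <= Cmod b / 3)%R).
  { intros y Hy. rewrite Cmod_mult. pose proof (Htt y Hy). nra. }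
  assert (Hs : forall y, (0 <= y <= 1)%R -> (2/3 * Cmod b <= Cmod (s y))%R).
  { intros y Hy. pose proof (Cmod_sub_ge b (b' * tt y)). pose proof (Hbtt y Hy). unfold s. lra. }
  assert (Hsn : forall y, (0 <= y <= 1)%R -> s y <> 0).
  { intros y Hy. apply Cmod_neq0. pose proof (Hs y Hy). lra. }
  set (ka := b + b' * c0).
  assert (Hka : ka = s 0%R) by (unfold ka, s, tt, x; f_equal; f_equal; ring).
  assert (Hkan : ka <> 0) by (rewrite Hka; apply Hsn; lra).
  set (zz := fun y => Wf (x y) / s y).
  set (mu := fun y => - (d / (x y * s y))).
  set (A := fun y => x y * ka / s y).
  set (B := fun y => ka / s y).
  assert (HA1 : forall y, (0 <= y <= 1)%R -> (Cmod (A y - 1) <= 3/2 * dl)%R).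
  { intros y Hy. unfold A. replace (x y * ka / s y - 1) with (b * (x y - 1) / s y).
    rewrite Cmod_div by auto. rewrite Cmod_mult. apply Rle_div_l. pose proof (Hs y Hy); lra.
    pose proof (Hs y Hy). pose proof (Hx1 y Hy). pose proof (Cmod_ge_0 (x y - 1)). nra.
    unfold ka, s, tt. field. apply Hsn; auto. }
  assert (HB1 : forall y, (0 <= y <= 1)%R -> (Cmod (B y - 1) <= 1/2 * dl)%R).
  { intros y Hy. unfold B. replace (ka / s y - 1) with (b' * c0 * (1 - x y) / s y).
    rewrite Cmod_div by auto. rewrite !Cmod_mult. apply Rle_div_l. pose proof (Hs y Hy); lra.
    replace (1 - x y) with (- (x y - 1)) by ring. rewrite Cmod_opp.
    pose proof (Hs y Hy). pose proof (Hx1 y Hy). pose proof (Cmod_ge_0 (x y - 1)).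
    pose proof (Cmod_ge_0 c0).
    assert (Cmod b' * Cmod c0 <= Cmod b / 6 * (8/7))%R by nra.
    assert (Cmod b' * Cmod c0 * Cmod (x y - 1) <= Cmod b / 6 * (8/7) * dl)%R.
    { apply Rle_trans with (Cmod b' * Cmod c0 * dl)%R. apply Rmult_le_compat_l. nra. auto.
      apply Rmult_le_compat_r; lra. }
    nra.
    unfold ka, s, tt. field. apply Hsn; auto. }
  assert (HAp : forall y, (0 <= y <= 1)%R -> (0 < fst (A y))%R).
  { intros y Hy. pose proof (fst_pos_near1 _ (3/2 * dl) (HA1 y Hy)). lra. }
  assert (HBp : forall y, (0 <= y <= 1)%R -> (0 < fst (B y))%R).
  { intros y Hy. pose proof (fst_pos_near1 _ (1/2 * dl) (HB1 y Hy)). lra. }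
  set (w := fun y => (g / b) * CL (A y) - (g' / b') * CL (B y)).
  set (E := fun y => Cexpo (w y)).
  assert (dx : forall y, Cder x y d) by (intros y; apply Cder_lin).
  assert (ds : forall y, Cder s y (b' * c0 * d)).
  { intros y. eapply Cder_ext. 2: apply (Cder_lin ka (b' * c0 * d)). intros u. unfold s, tt, x, ka. ring. }
  assert (Ht1 : tt 1%R = t) by (unfold tt, x, c0, d; field; auto).
  assert (Hs1 : s 1%R = b + b' * t) by (unfold s; rewrite Ht1; reflexivity).
  assert (Hx1' : x 1%R = X0) by (unfold x, d; ring).
  assert (Hz1 : zz 1%R = z).
  { unfold zz. rewrite Hx1', Hs1, HWX. field. rewrite <- Hs1. apply Hsn; lra. }
  assert (Hexp_le : forall u v, (u <= v)%R -> (exp u <= exp v)%R).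
  { intros u v Huv. destruct (Req_dec u v) as [Euv|Euv]. rewrite Euv; lra. left; apply exp_increasing; lra. }
  assert (HCLA : forall y, (0 <= y <= 1)%R -> (Cmod (CL (A y)) <= 1)%R).
  { intros y Hy. pose proof (CL_small (A y) (3/2 * dl) (HA1 y Hy) ltac:(lra)). lra. }
  assert (HCLB : forall y, (0 <= y <= 1)%R -> (Cmod (CL (B y)) <= 1)%R).
  { intros y Hy. pose proof (CL_small (B y) (1/2 * dl) (HB1 y Hy) ltac:(lra)). lra. }
  set (M := (exp (Cmod (g / b) + Cmod (g' / b')) / Cmod b)%R).
  assert (HE1 : / E 1%R = Cexpo (- (g / b) * CL (X0 * (b + b' * (t / X0)) / (b + b' * t)))
     * Cexpo ((g' / b') * CL ((b + b' * (t / X0)) / (b + b' * t)))).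
  { rewrite <- Cexpo_add.
    assert (Hw : Cexpo (w 1%R) * Cexpo (- w 1%R) = 1) by apply Cexpo_opp.
    unfold E. replace (/ Cexpo (w 1%R)) with (Cexpo (- w 1%R)).
    unfold w, A, B. rewrite Hx1', Hs1. unfold ka, c0. f_equal. ring.
    pose proof (Cexpo_neq0 (w 1%R)). field_simplify_eq; auto. rewrite Cmult_comm. auto. }
  replace (GKP_egf_term a b g a' b' g' t z) with (GKP_egf_term a b g a' b' g' (tt 1%R) (zz 1%R))
    by (rewrite Ht1, Hz1; reflexivity).
  match goal with |- is_series _ ?L => replace L with (/ E 1%R) by (rewrite HE1; reflexivity) end.
  apply (core a b g a' b' g' tt zz mu E M).
  -
    intros y Hy. eapply Cder_eq. apply Cder_scal. apply dx.
    unfold mu, tt. fold (tt y). change (b + b' * tt y) with (s y). unfold tt. field.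
    split; auto.
  -
    intros y Hy. eapply Cder_eq. apply Cder_div. apply (HWd y Hy). apply ds. auto.
    fold (x y). change (b + b' * tt y) with (s y) in *.
    unfold zz, mu, s, tt. rewrite Ha'. field.
    split; [apply (Hsn y Hy) | split; auto].
  -
    intros y Hy. unfold E. eapply Cder_eq. apply Cder_exp.
    apply Cder_minus; apply Cder_scal; apply Cder_CL; auto.
    apply Cder_div. apply Cder_mult. apply dx. apply Cder_const. apply ds. auto.
    apply Cder_div. apply Cder_const. apply ds. auto.
    unfold mu, A, B. unfold s, tt. unfold ka. field.
    split; [apply (Hsn y Hy) | repeat split; auto].
  - intros y Hy. pose proof (Htt y Hy). lra.
  - intros y Hy. unfold zz. rewrite Cmod_div by auto. pose proof (Hs y Hy).
    pose proof (HW1 (x y) (Hx1 y Hy)). pose proof (Hx1 y Hy).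
    assert (Cmod (Wf (x y)) <= 24 * dl)%R by lra.
    pose proof (Cmod_ge_0 (Wf (x y))).
    assert (Cmod (Wf (x y)) / Cmod (s y) <= 36 * dl / Cmod b)%R.
    { apply Rle_div_l. lra. unfold Rdiv. 
      replace (36 * dl * / Cmod b * Cmod (s y))%R with (36 * dl * (Cmod (s y) / Cmod b))%R by (field; lra).
      assert (2/3 <= Cmod (s y) / Cmod b)%R by (apply div_ge; lra). nra. }
    set (Q := (2 * Kc a b g a' b' g')%R) in *.
    assert (HQ : (0 <= Q)%R) by (unfold Q; pose proof (Kc_ge1 a b g a' b' g'); lra).
    apply Rle_trans with (Q * (36 * dl / Cmod b))%R. apply Rmult_le_compat_l; auto.
    replace (Q * (36 * dl / Cmod b))%R with ((144 * Q * dl) / Cmod b * / 4)%R by (field; lra).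
    assert ((144 * Q * dl) / Cmod b <= 1)%R by (apply Rle_div_l; lra). lra.
  - intros y Hy. unfold mu, E. rewrite Cmod_mult, Cmod_opp, Cmod_div, Cmod_mult.
    2: { apply Cmod_neq0. rewrite Cmod_mult. pose proof (Hxm y Hy). pose proof (Hs y Hy). nra. }
    pose proof (Cmod_Cexpo_le (w y)).
    assert (Hw : (Cmod (w y) <= Cmod (g / b) + Cmod (g' / b'))%R).
    { unfold w. unfold Rminus. eapply Rle_trans. unfold Cminus. apply Cmod_triangle. rewrite Cmod_opp, !Cmod_mult.
      pose proof (HCLA y Hy). pose proof (HCLB y Hy). pose proof (Cmod_ge_0 (g/b)). pose proof (Cmod_ge_0 (g'/b')). nra. }
    pose proof (Hexp_le _ _ Hw). pose proof (Hxm y Hy). pose proof (Hs y Hy).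
    pose proof (Cmod_ge_0 d). pose proof (Cmod_ge_0 (Cexpo (w y))).
    assert (Cmod d / (Cmod (x y) * Cmod (s y)) <= 1 / Cmod b)%R.
    { apply Rle_div_l. nra. unfold Rdiv. rewrite Rmult_1_l.
      replace (/ Cmod b * (Cmod (x y) * Cmod (s y)))%R with (Cmod (x y) * (Cmod (s y) / Cmod b))%R by (field; lra).
      assert (2/3 <= Cmod (s y) / Cmod b)%R by (apply div_ge; lra). nra. }
    unfold M. unfold Rdiv at 2. 
    replace (exp (Cmod (g / b) + Cmod (g' / b')) * / Cmod b)%R with (1 / Cmod b * exp (Cmod (g / b) + Cmod (g' / b')))%R by (field; lra).
    apply Rmult_le_compat. apply Rdiv_le_0_compat. auto. nra. auto. auto. lra.
  - unfold zz. replace (x 0%R) with (RtoC 1) by (unfold x; ring). rewrite HW0. unfold Cdiv. ring.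
  - unfold E, w, A, B. rewrite <- Hka. replace (x 0%R) with (RtoC 1) by (unfold x; ring).
    replace (1 * ka / ka) with (RtoC 1) by (field; auto). replace (ka / ka) with (RtoC 1) by (field; auto).
    rewrite CL_1. replace (g / b * 0 - g' / b' * 0) with (RtoC 0) by ring. apply Cexpo_0.
  - apply Cexpo_neq0.
Qed.
Open Scope C_scope.

Lemma final_common (a b g a' b' g' : C) (Wf : C -> C) (t z X0 : C) (eps : R) :
  b <> 0 -> b' <> 0 -> a / b = a' / b' + 1 ->
  (Cmod t < eps)%R -> (2 * eps <= 1)%R -> (6 * Cmod b' * eps <= Cmod b)%R ->
  (Cmod (X0 - 1) <= 48 * Cmod b * eps)%R -> (48 * Cmod b * eps <= 1/8)%R ->
  (144 * (2 * Kc a b g a' b' g') * (48 * Cmod b * eps) <= Cmod b)%R ->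
  (forall x, Cmod (x - 1) <= 48 * Cmod b * eps -> Cmod (Wf x) <= 24 * Cmod (x - 1))%R ->
  (forall y, (0 <= y <= 1)%R -> Cder (fun y => Wf (1 + RtoC y * (X0 - 1))) y
      (- ((X0 - 1) / (1 + RtoC y * (X0 - 1))) * (1 - a * Wf (1 + RtoC y * (X0 - 1)) / b))) ->
  Wf 1 = 0 -> Wf X0 = z * (b + b' * t) ->
  is_series (GKP_egf_term a b g a' b' g' t z)
    (Cprinpow (1 - b / (b + b' * t) * (1 - X0)) (- g / b)
     * Cprinpow (1 - b' * t / (b + b' * t) * (1 - / X0)) (g' / b')).
Proof.
  intros Hb Hb' Hrel Ht He Hbt HX Hdl Hbz HW1 HWd HW0 HWX.
  assert (Hbpos : (0 < Cmod b)%R) by (apply Cmod_gt_0; auto).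
  assert (Heps : (0 <= eps)%R) by (pose proof (Cmod_ge_0 t); lra).
  set (dl := (48 * Cmod b * eps)%R) in *.
  assert (Hdl0 : (0 <= dl)%R) by (unfold dl; nra).
  assert (HX0m : (7/8 <= Cmod X0)%R) by (pose proof (Cmod_lower X0 dl HX); lra).
  assert (HX0n : X0 <> 0) by (apply Cmod_neq0; lra).
  set (s0 := b + b' * t).
  assert (Hbt' : (Cmod (b' * t) <= Cmod b / 6)%R).
  { rewrite Cmod_mult. pose proof (Cmod_ge_0 b'). pose proof (Cmod_ge_0 t). nra. }
  assert (Hs0 : (5/6 * Cmod b <= Cmod s0)%R).
  { pose proof (Cmod_sub_ge b (b' * t)). unfold s0. lra. }
  assert (Hs0n : s0 <> 0) by (apply Cmod_neq0; lra).
  assert (EA : 1 - b / s0 * (1 - X0) = X0 * (b + b' * (t / X0)) / s0).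
  { unfold s0 in *. field. auto. }
  assert (EB : 1 - b' * t / s0 * (1 - / X0) = (b + b' * (t / X0)) / s0).
  { unfold s0 in *. field. auto. }
  assert (HA : (0 < fst (X0 * (b + b' * (t / X0)) / s0)%C)%R).
  { rewrite <- EA. apply Rlt_le_trans with (1 - 6/5 * dl)%R. lra.
    apply fst_pos_near1. 2: lra.
    replace (1 - b / s0 * (1 - X0) - 1) with (b * (X0 - 1) / s0) by (field; auto).
    rewrite Cmod_div, Cmod_mult by auto. apply Rle_div_l. lra.
    pose proof (Cmod_ge_0 (X0 - 1)). nra. }
  assert (HB : (0 < fst ((b + b' * (t / X0)) / s0)%C)%R).
  { rewrite <- EB. apply Rlt_le_trans with (1 - 1/2)%R. lra.
    apply fst_pos_near1. 2: lra.
    replace (1 - b' * t / s0 * (1 - / X0) - 1) with (- (b' * t * (X0 - 1)) / (X0 * s0)) by (field; auto).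
    rewrite Cmod_div, Cmod_opp, !Cmod_mult. apply Rle_div_l. 
    assert (0 < Cmod X0 * Cmod s0)%R by nra. auto.
    pose proof (Cmod_ge_0 (X0 - 1)). rewrite <- Cmod_mult.
    assert (Cmod (b' * t) * Cmod (X0 - 1) <= Cmod b / 6 * (1/8))%R.
    { apply Rmult_le_compat; auto. apply Cmod_ge_0. lra. }
    nra.
    apply Cmod_neq0. rewrite Cmod_mult. nra. }
  fold s0. rewrite EA, EB.
  rewrite !Cprinpow_CL by auto.
  replace (- g / b) with (- (g / b)) by (field; auto).
  apply (path_thm a b g a' b' g' Wf t z X0 eps dl); auto; lra.
Qed.
Open Scope C_scope.

Lemma inv_Cexpo (w : C) : / Cexpo w = Cexpo (- w).
Proof.
  pose proof (Cexpo_opp w). pose proof (Cexpo_neq0 w).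
  replace (Cexpo (- w)) with (/ Cexpo w * (Cexpo w * Cexpo (- w))) by (field; auto).
  rewrite H. ring.
Qed.

Lemma x_path_near (X0 : C) (dl y : R) : (Cmod (X0 - 1) <= dl)%R -> (0 <= y <= 1)%R ->
  (Cmod (1 + RtoC y * (X0 - 1) - 1) <= dl)%R.
Proof.
  intros H Hy. replace (1 + RtoC y * (X0 - 1) - 1) with (RtoC y * (X0 - 1)) by ring.
  rewrite Cmod_mult, Cmod_R, Rabs_pos_eq by lra. pose proof (Cmod_ge_0 (X0 - 1)). nra.
Qed.

Lemma Cmod_Cdiv_le (u v : C) (k : R) : v <> 0 -> (Cmod u <= k * Cmod v)%R -> (Cmod (u / v) <= k)%R.
Proof.
  intros Hv H. rewrite Cmod_div by auto. apply Rle_div_l. apply Cmod_gt_0; auto. lra.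
Qed.

Theorem mainTheorem7 (a b g a' b' g' : C) :
  b <> 0 -> b' <> 0 -> a / b = a' / b' + 1 ->
  (a <> 0 ->
   exists eps : R, (0 < eps)%R /\
   forall t z : C, (Cmod t < eps)%R -> (Cmod z < eps)%R ->
     let rho := b / (b + b' * t) in
     is_series (GKP_egf_term a b g a' b' g' t z)
       (Cprinpow (1 - rho * (1 - Cprinpow (1 - a * z / rho) (b / a))) (- g / b)
        * Cprinpow (1 - b' * t / (b + b' * t) * (1 - Cprinpow (1 - a * z / rho) (- b / a)))
               (g' / b'))) /\
  (a = 0 ->
   exists eps : R, (0 < eps)%R /\
   forall t z : C, (Cmod t < eps)%R -> (Cmod z < eps)%R ->
     let rho := b / (b + b' * t) in
     is_series (GKP_egf_term a b g a' b' g' t z)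
       (Cprinpow (1 - rho * (1 - Cexpo (- z * (b + b' * t)))) (- g / b)
        * Cprinpow (1 - b' * t / (b + b' * t) * (1 - Cexpo (z * (b + b' * t))))
               (g' / b'))).
Proof.
  intros Hb Hb' Hrel.
  assert (Hbpos : (0 < Cmod b)%R) by (apply Cmod_gt_0; auto).
  set (Q := (2 * Kc a b g a' b' g')%R).
  assert (HQ : (2 <= Q)%R) by (unfold Q; pose proof (Kc_ge1 a b g a' b' g'); lra).
  set (S := (1 + Q + Cmod a + Cmod b + Cmod b' / Cmod b)%R).
  assert (HS : forall u, (0 <= u)%R -> (u <= S)%R -> (0 < S)%R).
  { intros u _ _. unfold S. pose proof (Cmod_ge_0 a). pose proof (Cmod_ge_0 b').
    assert (0 <= Cmod b' / Cmod b)%R by (apply Rdiv_le_0_compat; lra). lra. }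
  assert (HS0 : (0 < S)%R) by (apply (HS 0%R); [lra | unfold S; pose proof (Cmod_ge_0 a); pose proof (Cmod_ge_0 b'); assert (0 <= Cmod b' / Cmod b)%R by (apply Rdiv_le_0_compat; lra); lra]).
  set (eps := (/ (7000 * S))%R).
  assert (Heps : (0 < eps)%R) by (unfold eps; apply Rinv_0_lt_compat; lra).
  assert (Hu : forall u, (0 <= u)%R -> (u <= S)%R -> (7000 * u * eps <= 1)%R).
  { intros u H0 H1. unfold eps. replace (7000 * u * / (7000 * S))%R with (u / S)%R by (field; lra).
    apply Rle_div_l. lra. lra. }
  assert (Hsa : (Cmod a <= S)%R).
  { unfold S. pose proof (Cmod_ge_0 b'). assert (0 <= Cmod b' / Cmod b)%R by (apply Rdiv_le_0_compat; lra). lra. }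
  assert (Hsb : (Cmod b <= S)%R).
  { unfold S. pose proof (Cmod_ge_0 a). pose proof (Cmod_ge_0 b'). assert (0 <= Cmod b' / Cmod b)%R by (apply Rdiv_le_0_compat; lra). lra. }
  assert (HsQ : (Q <= S)%R).
  { unfold S. pose proof (Cmod_ge_0 a). pose proof (Cmod_ge_0 b'). assert (0 <= Cmod b' / Cmod b)%R by (apply Rdiv_le_0_compat; lra). lra. }
  assert (Hsb' : (Cmod b' / Cmod b <= S)%R).
  { unfold S. pose proof (Cmod_ge_0 a). lra. }
  pose proof (Hu _ (Cmod_ge_0 a) Hsa) as Ha_eps.
  pose proof (Hu _ (Cmod_ge_0 b) Hsb) as Hb_eps.
  pose proof (Hu Q ltac:(lra) HsQ) as HQ_eps.
  assert (Hb'_eps : (6 * Cmod b' * eps <= Cmod b)%R).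
  { pose proof (Hu _ (Rdiv_le_0_compat _ _ (Cmod_ge_0 b') Hbpos) Hsb').
    replace (Cmod b' / Cmod b)%R with (Cmod b' * / Cmod b)%R in H by reflexivity.
    assert (6 * (Cmod b' * eps) * / Cmod b <= 1)%R by nra.
    replace (6 * Cmod b' * eps)%R with (6 * (Cmod b' * eps) * / Cmod b * Cmod b)%R by (field; lra). nra. }
  assert (He1 : (2 * eps <= 1)%R) by (pose proof (Hu 1%R ltac:(lra) ltac:(lra)); lra).
  assert (Hdl : (48 * Cmod b * eps <= 1/8)%R) by lra.
  assert (Hbz : (144 * Q * (48 * Cmod b * eps) <= Cmod b)%R).
  { assert (144 * 48 * (Q * eps) <= 1)%R by lra. nra. }
  assert (Hs0 : forall t, (Cmod t < eps)%R -> (Cmod (b + b' * t) <= 7/6 * Cmod b)%R /\ b + b' * t <> 0).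
  { intros t Ht. assert (Cmod (b' * t) <= Cmod b / 6)%R.
    { rewrite Cmod_mult. pose proof (Cmod_ge_0 b'). pose proof (Cmod_ge_0 t). nra. }
    split. pose proof (Cmod_triangle b (b' * t)). lra.
    apply Cmod_neq0. pose proof (Cmod_sub_ge b (b' * t)). lra. }
  split.
  -
    intros Ha. exists eps. split; auto. intros t z Ht Hz rho.
    assert (Hapos : (0 < Cmod a)%R) by (apply Cmod_gt_0; auto).
    destruct (Hs0 t Ht) as [Hs0b Hs0n].
    set (s0 := b + b' * t) in *.
    set (u0 := 1 - a * z / rho).
    assert (Hu0 : u0 = 1 - a * z * s0 / b) by (unfold u0, rho; field; auto).
    assert (Hu01 : (Cmod (u0 - 1) <= 7/6 * Cmod a * eps)%R).
    { rewrite Hu0. replace (1 - a * z * s0 / b - 1) with (- (a * z * s0) / b) by (field; auto).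
      apply Cmod_Cdiv_le; auto. rewrite Cmod_opp, !Cmod_mult.
      pose proof (Cmod_ge_0 a). pose proof (Cmod_ge_0 z). pose proof (Cmod_ge_0 s0).
      assert (Cmod a * Cmod z <= Cmod a * eps)%R by nra.
      assert (Cmod a * Cmod z * Cmod s0 <= Cmod a * eps * (7/6 * Cmod b))%R.
      { apply Rmult_le_compat; try nra. }
      nra. }
    assert (Hu0p : (0 < fst u0)%R).
    { pose proof (fst_pos_near1 u0 _ Hu01 ltac:(lra)). lra. }
    set (v := (b / a) * CL u0).
    assert (HCLu : (Cmod (CL u0) <= 4 * (7/6 * Cmod a * eps))%R) by (apply CL_small; auto; lra).
    assert (Hv : (Cmod v <= 14/3 * Cmod b * eps)%R).
    { unfold v. rewrite Cmod_mult, Cmod_div by auto.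
      replace (14/3 * Cmod b * eps)%R with (Cmod b / Cmod a * (4 * (7/6 * Cmod a * eps)))%R by (field; lra).
      apply Rmult_le_compat_l. apply Rdiv_le_0_compat; lra. auto. }
    set (X0 := Cexpo v).
    assert (HP1 : Cprinpow u0 (b / a) = X0) by (rewrite Cprinpow_CL; auto).
    assert (HP2 : Cprinpow u0 (- b / a) = / X0).
    { rewrite Cprinpow_CL by auto. unfold X0. rewrite inv_Cexpo. unfold v. f_equal. field. auto. }
    fold u0. rewrite HP1, HP2. unfold rho. fold s0.
    set (Wf := fun x => (b / a) * (1 - Cexpo ((a / b) * CL x))).
    apply (final_common a b g a' b' g' Wf t z X0 eps); auto.
    + unfold X0. eapply Rle_trans. apply Cexpo_small. nra. nra.
    + intros x Hx. unfold Wf. rewrite Cmod_mult, Cmod_div by auto.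
      pose proof (CL_small x _ Hx ltac:(lra)) as HCx.
      assert (HCx' : (Cmod (CL x) <= 4 * Cmod (x - 1))%R).
      { apply CL_small. lra. pose proof (Cmod_ge_0 (x-1)). lra. }
      assert (Hv' : (Cmod ((a / b) * CL x) <= 1)%R).
      { rewrite Cmod_mult, Cmod_div by auto.
        assert (Cmod a / Cmod b * Cmod (CL x) <= Cmod a / Cmod b * (4 * (48 * Cmod b * eps)))%R.
        { apply Rmult_le_compat_l. apply Rdiv_le_0_compat; lra. auto. }
        replace (Cmod a / Cmod b * (4 * (48 * Cmod b * eps)))%R with (192 * Cmod a * eps)%R in H by (field; lra).
        lra. }
      pose proof (Cexpo_small _ Hv').
      replace (1 - Cexpo (a / b * CL x)) with (- (Cexpo (a / b * CL x) - 1)) by ring. rewrite Cmod_opp.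
      rewrite Cmod_mult, Cmod_div in H by auto.
      assert (Cmod (Cexpo (a / b * CL x) - 1) <= 6 * (Cmod a / Cmod b) * (4 * Cmod (x - 1)))%R.
      { eapply Rle_trans. apply H. rewrite Rmult_assoc. apply Rmult_le_compat_l. lra.
        apply Rmult_le_compat_l. apply Rdiv_le_0_compat; lra. auto. }
      apply Rle_trans with (Cmod b / Cmod a * (6 * (Cmod a / Cmod b) * (4 * Cmod (x - 1))))%R.
      apply Rmult_le_compat_l. apply Rdiv_le_0_compat; lra. auto.
      right. field. lra.
    + intros y Hy. unfold Wf.
      assert (Hxp : (0 < fst (1 + RtoC y * (X0 - 1))%C)%R).
      { assert (HX : (Cmod (X0 - 1) <= 48 * Cmod b * eps)%R).
        { unfold X0. eapply Rle_trans. apply Cexpo_small. nra. nra. }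
        pose proof (fst_pos_near1 _ _ (x_path_near X0 _ y HX Hy) ltac:(lra)). lra. }
      assert (Hxn : 1 + RtoC y * (X0 - 1) <> 0) by (intro E; rewrite E in Hxp; simpl in Hxp; lra).
      eapply Cder_eq. apply Cder_scal. apply Cder_minus. apply Cder_const. apply Cder_exp.
      apply Cder_scal. apply Cder_CL. apply Cder_lin. auto.
      cbv beta. field. auto.
    + unfold Wf. rewrite CL_1. replace (a / b * 0) with (RtoC 0) by ring. rewrite Cexpo_0. ring.
    + unfold Wf, X0. rewrite CL_Cexpo.
      * unfold v. replace (a / b * (b / a * CL u0)) with (CL u0) by (field; auto).
        rewrite Cexpo_CL by auto. rewrite Hu0. unfold s0. field. auto.
      * pose proof (Cmod_snd v). pose proof PI2_1. lra.
  -
    intros Ha0. exists eps. split; auto. intros t z Ht Hz rho.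
    destruct (Hs0 t Ht) as [Hs0b Hs0n].
    set (s0 := b + b' * t) in *.
    set (X0 := Cexpo (- z * s0)).
    assert (Hzs : (Cmod (- z * s0) <= 7/6 * Cmod b * eps)%R).
    { rewrite Cmod_mult, Cmod_opp. pose proof (Cmod_ge_0 z). pose proof (Cmod_ge_0 s0).
      apply Rle_trans with (eps * (7/6 * Cmod b))%R. apply Rmult_le_compat; lra. lra. }
    assert (HX : (Cmod (X0 - 1) <= 48 * Cmod b * eps)%R).
    { unfold X0. eapply Rle_trans. apply Cexpo_small. nra. nra. }
    assert (HE : Cexpo (z * s0) = / X0).
    { unfold X0. rewrite inv_Cexpo. f_equal. ring. }
    rewrite HE. unfold rho. fold s0.
    set (Wf := fun x => - CL x).
    apply (final_common a b g a' b' g' Wf t z X0 eps); auto.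
    + intros x Hx. unfold Wf. rewrite Cmod_opp.
      assert (HCx' : (Cmod (CL x) <= 4 * Cmod (x - 1))%R).
      { apply CL_small. lra. pose proof (Cmod_ge_0 (x-1)). lra. }
      pose proof (Cmod_ge_0 (x - 1)). lra.
    + intros y Hy. unfold Wf.
      assert (Hxp : (0 < fst (1 + RtoC y * (X0 - 1))%C)%R).
      { pose proof (fst_pos_near1 _ _ (x_path_near X0 _ y HX Hy) ltac:(lra)). lra. }
      assert (Hxn : 1 + RtoC y * (X0 - 1) <> 0) by (intro E; rewrite E in Hxp; simpl in Hxp; lra).
      apply Cder_ext with (fun y0 : R => (-1) * CL (1 + RtoC y0 * (X0 - 1))).
      intros y0. unfold Wf. ring.
      eapply Cder_eq. apply Cder_scal. apply Cder_CL. apply Cder_lin. auto.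
      rewrite Ha0. field. auto.
    + unfold Wf. rewrite CL_1. ring.
    + unfold Wf, X0. rewrite CL_Cexpo. unfold s0. ring.
      pose proof (Cmod_snd (- z * s0)). pose proof PI2_1. lra.
Qed.
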